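(* Let $f:\mathbb{R}^p\to\mathbb{R}$ be convex and differentiable with Lipschitz gradient, $g_j:\mathbb{R}\to\mathbb{R}\cup\{+\infty\}$ proper closed convex, $g(x)=\sum_jg_j(x_j)$, and let $x^\star$ be a minimizer of $f+g$ satisfying $-\nabla f(x^\star)\in\operatorname{ri}(\partial g(x^\star))$, with $f$ $\mathcal{C}^2$ near $x^\star$. Let $\gamma_j>0$. Then for all $j\in\mathcal{S}^c$, $\operatorname{prox}_{\gamma_jg_j}$ is constant on a neighbourhood of $x^\star_j-\gamma_j\nabla_jf(x^\star)$. Moreover, the map $x\mapsto\operatorname{prox}_{\gamma_jg_j}(x_j-\gamma_j\nabla_jf(x))$ is differentiable at $x^\star$ with gradient $0$.
   Context: $\mathcal{S}=\mathcal{S}_{x^\star}=\{j:\partial g_j(x^\star_j)\text{ is a singleton}\}$, $\mathcal{S}^c=[p]\setminus\mathcal{S}$. $\operatorname{ri}$ denotes relative interior. $\operatorname{prox}_{\gamma h}(v)=\arg\min_y\frac1{2\gamma}(v-y)^2+h(y)$. *)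

(* Defs.v *)
From HB Require Import structures.
From mathcomp Require Import all_boot all_order all_algebra.
From mathcomp Require Import all_classical all_reals all_analysis.
Set Implicit Arguments. Unset Strict Implicit. Unset Printing Implicit Defensive.
Import Order.TTheory GRing.Theory Num.Theory.
Import numFieldNormedType.Exports.
Local Open Scope classical_set_scope.
Local Open Scope ring_scope.

Section Defs.
Variables (R : realType) (p : nat).
Notation V := 'rV[R]_p.

Definition evec (j : 'I_p) : V := delta_mx ord0 j.

Definition partial (f : V -> R) (j : 'I_p) (x : V) : R := 'D_(evec j) f x.

Definition grad (f : V -> R) (x : V) : V := \row_j partial f j x.

Definition convex_fun (f : V -> R) : Prop :=
  forall (x y : V) (t : R), (0 <= t <= 1)%R ->
    f (t *: x + (1 - t) *: y) <= t * f x + (1 - t) * f y.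

Definition lipschitz_grad (f : V -> R) : Prop :=
  exists L : R, forall x y : V, `|grad f x - grad f y| <= L * `|x - y|.

Definition C2_near (f : V -> R) (x0 : V) : Prop :=
  exists U : set V, [/\ open U, U x0 &
    forall x, U x -> forall i j : 'I_p,
      derivable (partial f j) x (evec i) /\
      {for x, continuous (partial (partial f j) i)}].

Definition proper_fun (h : R -> \bar R) : Prop :=
  (forall u, h u != -oo%E) /\ (exists u, h u != +oo%E).

Definition convex_efun (h : R -> \bar R) : Prop :=
  forall (u v t : R), (0 < t < 1)%R ->
    (h (t * u + (1 - t) * v)%R <= t%:E * h u + (1 - t)%R%:E * h v)%E.

Definition proper_closed_convex (h : R -> \bar R) : Prop :=
  [/\ proper_fun h, lower_semicontinuous h & convex_efun h].

Definition sepsum (gs : 'I_p -> R -> \bar R) (x : V) : \bar R :=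
  (\sum_(j < p) gs j (x ord0 j))%E.

Definition dotp (u v : V) : R := \sum_(j < p) u ord0 j * v ord0 j.

Definition subdiff (g : V -> \bar R) (x : V) : set V :=
  [set v | forall y : V, (g x + (dotp v (y - x))%:E <= g y)%E].

Definition subdiff1 (h : R -> \bar R) (u : R) : set R :=
  [set s | forall w : R, (h u + (s * (w - u))%R%:E <= h w)%E].

Definition aff_hull (C : set V) : set V :=
  [set y | exists (n : nat) (pts : 'I_n -> V) (w : 'I_n -> R),
     [/\ forall i, C (pts i), \sum_(i < n) w i = 1 &
         y = \sum_(i < n) w i *: pts i]].

Definition rel_int (C : set V) : set V :=
  [set x | C x /\ exists2 e : R, 0 < e &
     forall y, aff_hull C y -> `|y - x| < e -> C y].

(* the index set S_{x*} = { j : \partial g_j(x*_j) is a singleton } *)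
Definition supp_set (gs : 'I_p -> R -> \bar R) (x : V) : set 'I_p :=
  [set j | exists s : R, subdiff1 (gs j) (x ord0 j) = [set s]].

Definition prox (gamma : R) (h : R -> \bar R) (v : R) : R :=
  xget 0 [set y | forall z : R,
    (((v - y) ^+ 2 / (2 * gamma))%R%:E + h y <=
     ((v - z) ^+ 2 / (2 * gamma))%R%:E + h z)%E].

End Defs.

(* Main.v *)
Require Import Defs.
From HB Require Import structures.
From mathcomp Require Import all_boot all_order all_algebra.
From mathcomp Require Import all_classical all_reals all_analysis.
From mathcomp Require Import ring lra.
Import Order.TTheory GRing.Theory Num.Theory.
Import numFieldNormedType.Exports.
Local Open Scope classical_set_scope.
Local Open Scope ring_scope.
Set Implicit Arguments. Unset Strict Implicit.
Lemma entry_le (R : realType) p (M : 'rV[R]_p) j : `|M ord0 j| <= `|M|.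
Proof.
rewrite [X in _ <= X]mx_normrE.
exact: (le_bigmax (ord0, j) (fun ij : prod_finType (ordinal 1) (ordinal p) => `|M ij.1 ij.2|)) || (apply: le_trans (le_bigmax _ (fun ij : prod _ _ => `|M ij.1 ij.2|) (ord0,j)) _; done).
Qed.

Lemma evec_scale_norm (R : realType) p (c : R) (j : 'I_p) : `|c *: evec R j| <= `|c|.
Proof.
rewrite [X in X <= _]mx_normrE; apply: bigmax_le => // -[i k] _ /=.
rewrite !mxE /=; case: eqP => _; case: eqP => _ /=; rewrite ?mulr1 ?mulr0 ?normr0 //.
Qed.

Lemma ereal_sum_nNy (R : realType) (I : Type) (s : seq I) (P : pred I) (F : I -> \bar R) :
  (forall i, F i != -oo%E) -> (\sum_(i <- s | P i) F i != -oo)%E.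
Proof.
move=> H; elim/big_ind: _ => //; move=> a b; rewrite adde_eq_ninfty => /negbTE -> /negbTE -> //.
Qed.

Lemma near_const_diff (R : realType) (V : normedModType R) (F : V -> R) x c :
  (\forall y \near x, F y = c) -> differentiable F x /\ 'd F x = 0 :> (V -> R).
Proof.
move=> Hn.
have Fx : F x = c by apply: (nbhs_singleton Hn).
have E : F \o shift x = cst (F x) + ('d (cst c) x : {linear V -> R}) +o_ (nbhs (0:V)) id.
  apply/eqaddoP => eps eps0.
  move/nbhs_ballP: Hn => [d d0 Hd].
  apply/nbhs_ballP; exists d => // h; rewrite -ball_normE /= sub0r normrN => hd.
  rewrite [X in `|X|](_ : _ = F (h + x) - (F x + 'd (cst c) x h)) //.
  have -> : F (h + x) = c by apply: Hd; rewrite -ball_normE /= (addrC h x) opprD addrA subrr sub0r normrN.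
  by rewrite /= Fx diff_cst /= addr0 subrr normr0 mulr_ge0 // ltW.
have dF : 'd F x = ('d (cst c) x : {linear V -> R}) :> (V -> R).
  apply: diff_unique => //; rewrite diff_cst; by move=> y; apply: cvg_cst.
rewrite diff_cst in dF. split; last by rewrite dF.
apply/diff_locallyP; rewrite dF; split => //; first by move=> y; apply: cvg_cst.
by rewrite diff_cst in E.
Qed.

Lemma prox_key (R : realType) (g u v z : R) : 0 < g ->
  (v - z) ^+ 2 / (2 * g) + (v - u) / g * (z - u) = (v - u) ^+ 2 / (2 * g) + (z - u) ^+ 2 / (2 * g).
Proof. move=> g0; have g0' : g != 0 by rewrite gt_eqF. by field; rewrite ?g0' ?andbT // pnatr_eq0. Qed.

Lemma prox_eq (R : realType) (g : R) (h : R -> \bar R) (u v r : R) :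
  0 < g -> h u = r%:E -> subdiff1 h u ((v - u) / g) -> prox g h v = u.
Proof.
move=> g0 hu Hs; rewrite /prox; apply: xget_unique.
- move=> z /=; have := Hs z; rewrite hu.
  case Ez: (h z) => [hz| |] //; last by move=> _; rewrite addey // leey.
  rewrite -!EFinD !lee_fin => H.
  have := prox_key u v z g0.
  have : 0 <= (z - u) ^+ 2 / (2 * g) by rewrite divr_ge0 // ?sqr_ge0 // mulr_ge0 // ltW.
  lra.
- move=> y /(_ u); have := Hs y; rewrite hu.
  case Ey: (h y) => [hy| |] //.
  rewrite -!EFinD !lee_fin => H1 H2.
  have K := prox_key u v y g0.
  have : (y - u) ^+ 2 / (2 * g) <= 0 by lra.
  have g2 : 0 < 2 * g by rewrite mulr_gt0.
  rewrite pmulr_lle0 ?invr_gt0 // => Hsq.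
  have : (y - u) ^+ 2 = 0 by apply/eqP; rewrite eq_le Hsq sqr_ge0.
  by move/eqP; rewrite expf_eq0 /= subr_eq0 => /eqP.
Qed.

Lemma evec_entry (R : realType) p (c : R) (j i : 'I_p) :
  (c *: evec R j) ord0 i = if i == j then c else 0.
Proof. by rewrite !mxE /= eq_sym; case: eqP => _; rewrite ?mulr1 ?mulr0. Qed.

Lemma dotp_evec (R : realType) p (v : 'rV[R]_p) (c : R) j :
  dotp v (c *: evec R j) = v ord0 j * c.
Proof.
rewrite /dotp (bigD1 j) //= evec_entry eqxx big1 ?addr0 // => i /negbTE nij.
by rewrite evec_entry nij mulr0.
Qed.

Lemma sepsum_split (R : realType) p (gs : 'I_p -> R -> \bar R) (x : 'rV[R]_p) j :
  sepsum gs x = (gs j (x ord0 j) + \sum_(i < p | i != j) gs i (x ord0 i))%E.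
Proof. by rewrite /sepsum (bigD1 j). Qed.

Lemma subdiff_comp (R : realType) p (gs : 'I_p -> R -> \bar R) (x v : 'rV[R]_p) :
  (forall i, gs i (x ord0 i) \is a fin_num) ->
  subdiff (sepsum gs) x v -> forall j, subdiff1 (gs j) (x ord0 j) (v ord0 j).
Proof.
move=> hfin Hv j w.
have := Hv (x + (w - x ord0 j) *: evec R j).
rewrite addrAC subrr add0r dotp_evec !(sepsum_split _ _ j).
rewrite [in X in X -> _]mxE evec_entry eqxx [x ord0 j + _]addrC subrK.
rewrite (_ : (\sum_(i < p | i != j) gs i ((x + (w - x ord0 j) *: evec R j)%R ord0 i))%E =
   (\sum_(i < p | i != j) gs i (x ord0 i))%E); last first.
  by apply: eq_bigr => i /negbTE nij; rewrite mxE evec_entry nij addr0.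
have Afin : (\sum_(i < p | i != j) gs i (x ord0 i))%E \is a fin_num.
  by apply/sum_fin_numP => i _ _; apply: hfin.
by rewrite addeAC leeD2rE.
Qed.

Lemma subdiff_prod (R : realType) p (gs : 'I_p -> R -> \bar R) (x v : 'rV[R]_p) :
  (forall i, subdiff1 (gs i) (x ord0 i) (v ord0 i)) -> subdiff (sepsum gs) x v.
Proof.
move=> H y; rewrite /sepsum /dotp -sumEFin -big_split /=.
by apply: lee_sum => i _; rewrite !mxE; apply: H.
Qed.

Theorem lemma3 (R : realType) (p : nat) (f : 'rV[R]_p -> R)
  (gs : 'I_p -> R -> \bar R) (xstar : 'rV[R]_p) (gamma : 'I_p -> R) :
  convex_fun f ->
  (forall x, differentiable f x) ->
  lipschitz_grad f ->
  (forall j, proper_closed_convex (gs j)) ->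
  (forall y, ((f xstar)%:E + sepsum gs xstar <= (f y)%:E + sepsum gs y)%E) ->
  rel_int (subdiff (sepsum gs) xstar) (- grad f xstar) ->
  C2_near f xstar ->
  (forall j, 0 < gamma j) ->
  forall j : 'I_p, ~ supp_set gs xstar j ->
    (exists c : R, \forall u \near (xstar ord0 j - gamma j * partial f j xstar),
        prox (gamma j) (gs j) u = c) /\
    (let F := fun x : 'rV[R]_p =>
        prox (gamma j) (gs j) (x ord0 j - gamma j * partial f j x) in
     differentiable F xstar /\ forall v : 'rV[R]_p, 'd F xstar v = 0).
Proof.
move=> _ _ [L HL] gpcc hopt [Cv0 [e e0 He]] _ gam0 j nsupp.
set v0 := - grad f xstar.
set C := subdiff (sepsum gs) xstar.
have hfin : forall i, gs i (xstar ord0 i) \is a fin_num.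
  pose uu i := xget 0 [set u | gs i u != +oo%E].
  have Huu : forall i, gs i (uu i) != +oo%E.
    move=> i; apply: (xgetPex 0 (P := [set u | gs i u != +oo%E])).
    by have [[_ [u Hu]] _ _] := gpcc i; exists u.
  have Nn : forall i u, gs i u != -oo%E by move=> i u; have [[H _] _ _] := gpcc i.
  pose y0 : 'rV[R]_p := \row_i uu i.
  have y0fin : sepsum gs y0 \is a fin_num.
    apply/sum_fin_numP => i _ _; rewrite mxE fin_numE Nn /=; exact: Huu.
  have Sfin : sepsum gs xstar \is a fin_num.
    rewrite fin_numE ereal_sum_nNy //=; apply/negP => /eqP ES.
    have := hopt y0; rewrite ES addey // leye_eq => /eqP E.
    have F0 : ((f y0)%:E + sepsum gs y0)%E \is a fin_num by rewrite fin_numD y0fin.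
    by move: F0; rewrite E.
  by move=> i; move/sum_fin_numP: Sfin; apply.
have hsubj : forall i, subdiff1 (gs i) (xstar ord0 i) (v0 ord0 i).
  exact: subdiff_comp.
have hv0j : v0 ord0 j = - partial f j xstar by rewrite !mxE.
have [s1 [Is1 ns1]] : exists s1, subdiff1 (gs j) (xstar ord0 j) s1 /\ s1 != v0 ord0 j.
  apply: contrapT => H; apply: nsupp; exists (v0 ord0 j); apply/seteqP; split => s /=.
    move=> Is; apply: contrapT => ns; apply: H; exists s; split => //; exact/eqP.
  by move=> ->; apply: hsubj.
have Hint : forall t, `|t - v0 ord0 j| < e -> subdiff1 (gs j) (xstar ord0 j) t.
  move=> t ht.
  set c := t - v0 ord0 j.
  set vt := v0 + c *: evec R j.
  set v1 := v0 + (s1 - v0 ord0 j) *: evec R j.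
  have Cv1 : C v1.
    apply: subdiff_prod => i; rewrite /v1 mxE evec_entry.
    case: eqP => [->|_]; last by rewrite addr0; apply: hsubj.
    by rewrite addrC subrK.
  have ns1' : s1 - v0 ord0 j != 0 by rewrite subr_eq0.
  set lam := c / (s1 - v0 ord0 j).
  have Cvt : C vt.
    apply: He; last first.
      by rewrite /vt [v0 + _]addrC addrK; apply: le_lt_trans (evec_scale_norm _ _) ht.
    exists 2%N, (fun i : 'I_2 => if i == ord0 then v0 else v1),
      (fun i : 'I_2 => if i == ord0 then 1 - lam else lam); split.
    - by move=> i; case: ifP.
    - by rewrite !big_ord_recl big_ord0 /= addr0 subrK.
    - rewrite !big_ord_recl big_ord0 /= addr0 /vt /v1.
      rewrite scalerDr scalerA addrA -scalerDl subrK scale1r.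
      by rewrite /lam divfK.
  have := subdiff_comp hfin Cvt j.
  by rewrite /vt mxE evec_entry eqxx /c addrC subrK.
pose r := fine (gs j (xstar ord0 j)).
have Er : gs j (xstar ord0 j) = r%:E by rewrite /r fineK.
set u0 := xstar ord0 j - gamma j * partial f j xstar.
have gj0 := gam0 j.
have Hprox : forall u, `|u - u0| < gamma j * e ->
    prox (gamma j) (gs j) u = xstar ord0 j.
  move=> u hu; apply: (prox_eq (r := r)) => //; apply: Hint.
  have -> : (u - xstar ord0 j) / gamma j - v0 ord0 j = (u - u0) / gamma j.
    rewrite hv0j /u0; by field; exact: lt0r_neq0.
  by rewrite normrM normfV (gtr0_norm gj0) ltr_pdivrMr // mulrC.
split.
  exists (xstar ord0 j); apply/nbhs_ballP; exists (gamma j * e); first exact: mulr_gt0.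
  by move=> u; rewrite -ball_normE /= => hu; apply: Hprox; rewrite distrC.
move=> F.
suff Hn : \forall x \near xstar, F x = xstar ord0 j.
  have [dF dF0] := near_const_diff Hn.
  by split => // v; rewrite dF0.
have K0 : 0 < 1 + gamma j * `|L|.
  have : 0 <= gamma j * `|L| by rewrite mulr_ge0 // ltW.
  lra.
apply/nbhs_ballP; exists (gamma j * e / (1 + gamma j * `|L|)).
  by rewrite /= divr_gt0 // mulr_gt0.
move=> x; rewrite -ball_normE /= => hx; rewrite /F; apply: Hprox.
have h1 := entry_le (x - xstar) j; rewrite !mxE in h1.
have h2 := entry_le (grad f x - grad f xstar) j; rewrite !mxE in h2.
have h3 := le_trans h2 (HL x xstar).
set a := `|x - xstar| in h1 h3.
have ha : a * (1 + gamma j * `|L|) < gamma j * e.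
  by rewrite -ltr_pdivlMr // /a distrC.
have hL : L * a <= `|L| * a by rewrite ler_wpM2r // ?normr_ge0 // ler_norm.
set d1 := x ord0 j - xstar ord0 j in h1.
set d2 := partial f j x - partial f j xstar in h2 h3.
have -> : x ord0 j - gamma j * partial f j x - u0 = d1 - gamma j * d2.
  by rewrite /d1 /d2 /u0; ring.
apply: le_lt_trans (ler_normB _ _) _.
rewrite normrM (gtr0_norm gj0).
have : gamma j * `|d2| <= gamma j * (`|L| * a).
  by rewrite ler_wpM2l ?(ltW gj0) // (le_trans h3 hL).
nra.
Qed.
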